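(* Let $\rho$ be an $n$-qubit symmetric state and $\mathcal S$ a collection of subsets of $[n]$ such that the hypergraph $([n],\mathcal S)$ is connected. Then every $\sigma\in\mathcal C(\rho,\mathcal S)$ is a symmetric state.
   Context: Let $[n]=\{1,\dots,n\}$, $\mathcal H_{[n]}=(\mathbb C^2)^{\otimes n}$, and for $S\subseteq[n]$ let $\rho_S$ be the partial trace of $\rho$ over qubits outside $S$. $\mathcal C(\rho,\mathcal S)=\{\sigma\text{ density matrix on }\mathcal H_{[n]}:\sigma_S=\rho_S\ \forall S\in\mathcal S\}$. A state is symmetric if its range is contained in the subspace of vectors invariant under swapping any two qubits. The hypergraph $([n],\mathcal S)$ is connected if for every partition of $[n]$ into nonempty sets $X,Y$ some $S\in\mathcal S$ intersects both $X$ and $Y$. *)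

(* Defs.v *)
From HB Require Import structures.
From mathcomp Require Import all_boot all_order all_algebra all_fingroup.
Set Implicit Arguments. Unset Strict Implicit. Unset Printing Implicit Defensive.
Import Order.TTheory GRing.Theory Num.Theory.
Local Open Scope ring_scope.

(* Computational basis of (C^2)^{\otimes n}: bit strings x : 'I_n -> bool.
   A vector is a function basis n -> C, an operator a function basis n -> basis n -> C
   (matrix entries <x|A|y>). *)
Definition basis (n : nat) := {ffun 'I_n -> bool}.

Section Qubits.
Variable C : numClosedFieldType.
Variable n : nat.

Definition vect := basis n -> C.
Definition oper := basis n -> basis n -> C.

Definition apply_op (A : oper) (v : vect) : vect := fun x => \sum_y A x y * v y.

Definition density (A : oper) : Prop :=
  [/\ (forall x y, A x y = (A y x)^*),
      (forall v : vect, 0 <= \sum_x \sum_y (v x)^* * A x y * v y)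
    & \sum_x A x x = 1].

Definition glue (S : {set 'I_n}) (a z : basis n) : basis n :=
  [ffun i => if i \in S then a i else z i].

(* Partial trace over the qubits outside S.  rho_S is represented (redundantly)
   as an operator on the full basis whose entry at (a, b) depends only on the
   restrictions of a and b to S:  <a_S| rho_S |b_S> =
   sum over assignments z of the qubits outside S of <a_S z| rho |b_S z>. *)
Definition ptrace (S : {set 'I_n}) (A : oper) : oper :=
  fun a b => \sum_(z : basis n | [forall i in S, z i == false])
               A (glue S a z) (glue S b z).

Definition compat (rho : oper) (Sc : {set {set 'I_n}}) (sigma : oper) : Prop :=
  density sigma /\ forall S, S \in Sc -> ptrace S sigma =2 ptrace S rho.

Definition swap_basis (i j : 'I_n) (x : basis n) : basis n :=
  [ffun k => x (tperm i j k)].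

Definition sym_vect (v : vect) : Prop :=
  forall (i j : 'I_n) (x : basis n), v (swap_basis i j x) = v x.

Definition sym_state (A : oper) : Prop :=
  density A /\ forall v : vect, sym_vect (apply_op A v).

Definition hconnected (Sc : {set {set 'I_n}}) : Prop :=
  forall X : {set 'I_n}, X != set0 -> ~: X != set0 ->
    exists2 S, S \in Sc & (S :&: X != set0) && (S :&: ~: X != set0).

End Qubits.

(* Main.v *)
Require Import Defs.
From mathcomp Require Import all_boot all_order all_algebra all_fingroup.
From mathcomp Require Import ring.
Set Implicit Arguments. Unset Strict Implicit. Unset Printing Implicit Defensive.
Import Order.TTheory GRing.Theory Num.Theory.
Local Open Scope ring_scope.

Definition Bf (C : numClosedFieldType) n (A : oper C n) (w u : vect C n) : C :=
  \sum_x \sum_y (w x)^* * A x y * u y.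
Definition vadd (C : numClosedFieldType) n (s : C) (f : vect C n) (t : C) (g : vect C n) : vect C n :=
  fun a => s * f a + t * g a.
Definition delta (C : numClosedFieldType) n (p : basis n) : vect C n := fun a => (a == p)%:R.

Lemma Bf_addl (C : numClosedFieldType) n (A : oper C n) s f t g h :
  Bf A (vadd s f t g) h = s^* * Bf A f h + t^* * Bf A g h.
Proof.
rewrite /Bf !mulr_sumr -big_split; apply: eq_bigr => x _.
rewrite !mulr_sumr -big_split; apply: eq_bigr => y _.
rewrite /vadd rmorphD !rmorphM /=; ring.
Qed.

Lemma Bf_addr (C : numClosedFieldType) n (A : oper C n) s f t g h :
  Bf A h (vadd s f t g) = s * Bf A h f + t * Bf A h g.
Proof.
rewrite /Bf !mulr_sumr -big_split; apply: eq_bigr => x _.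
rewrite !mulr_sumr -big_split; apply: eq_bigr => y _.
rewrite /vadd /=; ring.
Qed.

Lemma Bf_delta (C : numClosedFieldType) n (A : oper C n) p q :
  Bf A (delta C p) (delta C q) = A p q.
Proof.
rewrite /Bf (bigD1 p) //=.
have -> : \sum_(i | i != p) \sum_y (delta C p i)^* * A i y * delta C q y = 0.
  apply: big1 => x /negbTE xp; apply: big1 => y _; by rewrite /delta xp rmorph0 !mul0r.
rewrite addr0 (bigD1 q) //=.
have -> : \sum_(i | i != q) (delta C p p)^* * A p i * delta C q i = 0.
  by apply: big1 => y /negbTE yq; rewrite /delta yq mulr0.
by rewrite /delta !eqxx rmorph1 addr0 mul1r mulr1.
Qed.

Lemma Bf_conj (C : numClosedFieldType) n (A : oper C n) w u :
  (forall x y, A x y = (A y x)^*) -> (Bf A u w)^* = Bf A w u.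
Proof.
move=> H; rewrite /Bf rmorph_sum exchange_big /=; apply: eq_bigr => y _.
rewrite rmorph_sum; apply: eq_bigr => x _.
rewrite !rmorphM /= conjCK -H; ring.
Qed.

Lemma psd_ker (C : numClosedFieldType) n (A : oper C n) u :
  (forall x y, A x y = (A y x)^*) -> (forall v, 0 <= Bf A v v) ->
  Bf A u u = 0 -> forall w, Bf A w u = 0.
Proof.
move=> herm psd uu0 w.
set b := Bf A w w; set c := Bf A w u.
have hb : 0 <= b by apply: psd.
have bconj : b^* = b by apply: geC0_conj.
have := psd (vadd (b + 1) u (- c) w).
rewrite Bf_addl !Bf_addr uu0 -(Bf_conj u w herm) -/b -/c.
rewrite rmorphD rmorph1 rmorphN /= bconj.
have -> : (b + 1) * ((b + 1) * 0 + - c * c^*) + - c^* * ((b + 1) * c + - c * b)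
   = - ((c * c^*) * (b + 2)) by ring.
rewrite oppr_ge0 => hle.
have hge : 0 <= (c * c^*) * (b + 2).
  by apply: mulr_ge0; [apply: mul_conjC_ge0 | apply: addr_ge0].
have /eqP : (c * c^*) * (b + 2) = 0 by apply/le_anti; rewrite hle hge.
rewrite mulf_eq0 mul_conjC_eq0 => /orP [/eqP //|].
have : 0 < b + 2 by apply: ltr_wpDl.
by move=> /gt_eqF ->.
Qed.

Lemma swapK n (i j : 'I_n) : involutive (swap_basis i j).
Proof. by move=> x; apply/ffunP => k; rewrite !ffunE tpermK. Qed.

Lemma row_inv (C : numClosedFieldType) n (s : oper C n) (i j : 'I_n) :
  density s -> \sum_x s (swap_basis i j x) x = 1 ->
  forall x y, s y (swap_basis i j x) = s y x.
Proof.
case=> herm psd tr1 hT x y.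
set P := swap_basis i j.
have Pinj : injective P by apply: inv_inj; apply: swapK.
pose u x : vect C n := vadd 1 (delta C x) (-1) (delta C (P x)).
have qE : forall x, Bf s (u x) (u x) =
   (s x x - s (P x) x) + (s (P x) (P x) - s x (P x)).
  move=> z; rewrite Bf_addl !Bf_addr !Bf_delta rmorph1 rmorphN1; ring.
have q0 : forall x, Bf s (u x) (u x) = 0.
  move=> z0; apply: (psumr_eq0P (P := predT) (F := fun z => Bf s (u z) (u z))) => //.
    by move=> z _; exact: psd.
  under eq_bigr => z _ do rewrite qE.
  rewrite big_split /= !sumrB.
  have -> : \sum_z s (P z) (P z) = \sum_z s z z by rewrite [RHS](reindex_inj Pinj).
  have -> : \sum_z s z (P z) = \sum_z s (P z) z.
    rewrite [RHS](reindex_inj Pinj); apply: eq_bigr => z _; by rewrite /P swapK.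
  by rewrite hT tr1 !subrr addr0.
have := psd_ker herm psd (q0 x) (delta C y).
rewrite Bf_addr !Bf_delta => /eqP; rewrite mul1r mulN1r subr_eq0 => /eqP.
by [].
Qed.

Definition proj n (S : {set 'I_n}) (x : basis n) : basis n :=
  [ffun k => if k \in S then x k else false].

Lemma sum_glue (C : numClosedFieldType) n (S : {set 'I_n}) (F : basis n -> C) :
  \sum_x F x = \sum_(a : basis n | [forall i in ~: S, a i == false])
                 \sum_(z : basis n | [forall i in S, z i == false]) F (glue S a z).
Proof.
rewrite pair_big_dep /=.
rewrite (reindex (fun x => (proj S x, proj (~: S) x))) /=; last first.
  exists (fun p => glue S p.1 p.2) => [x _|[a z]] /=.
    by apply/ffunP => k; rewrite !ffunE inE; case: (k \in S).
  rewrite inE /= => /andP [/forallP ha /forallP hz].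
  congr pair; apply/ffunP => k; rewrite !ffunE ?inE.
    case kS: (k \in S) => //; by have := ha k; rewrite inE kS => /eqP ->.
  case kS: (k \in S) => //=; by have := hz k; rewrite kS => /eqP ->.
apply: eq_big => [x|x _].
  apply/esym/andP; split; apply/forallP => k; apply/implyP; rewrite ?inE !ffunE.
    by move=> /negbTE ->.
  by rewrite inE => ->.
congr F; apply/ffunP => k; rewrite !ffunE inE; by case: (k \in S).
Qed.

Lemma glue_swap n (S : {set 'I_n}) (i j : 'I_n) a z : i \in S -> j \in S ->
  glue S (swap_basis i j a) z = swap_basis i j (glue S a z).
Proof.
move=> iS jS; apply/ffunP => k; rewrite !ffunE.
case: (tpermP i j k) => [->|->|/eqP ki /eqP kj].
- by rewrite iS jS.
- by rewrite iS jS.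
- by [].
Qed.

Lemma apply_delta (C : numClosedFieldType) n (A : oper C n) x y :
  apply_op A (delta C y) x = A x y.
Proof.
rewrite /apply_op (bigD1 y) //= big1 ?addr0; first by rewrite /delta eqxx mulr1.
by move=> b /negbTE by'; rewrite /delta by' mulr0.
Qed.

Lemma sym_rows (C : numClosedFieldType) n (A : oper C n) :
  sym_state A -> forall i j x y, A (swap_basis i j x) y = A x y.
Proof.
case=> _ H i j x y; by rewrite -!apply_delta H.
Qed.

Definition Tsw (C : numClosedFieldType) n (A : oper C n) (i j : 'I_n) :=
  \sum_x A (swap_basis i j x) x.

Lemma Tsw_ptrace (C : numClosedFieldType) n (A : oper C n) (S : {set 'I_n}) (i j : 'I_n) :
  i \in S -> j \in S ->
  Tsw A i j = \sum_(a : basis n | [forall k in ~: S, a k == false])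
                 ptrace S A (swap_basis i j a) a.
Proof.
move=> iS jS; rewrite /Tsw (sum_glue S); apply: eq_bigr => a _.
rewrite /ptrace; apply: eq_bigr => z _; by rewrite glue_swap.
Qed.

Lemma pair_inv (C : numClosedFieldType) n (rho : oper C n) (Sc : {set {set 'I_n}}) (sigma : oper C n) (S : {set 'I_n}) (i j : 'I_n) :
  sym_state rho -> compat rho Sc sigma -> S \in Sc -> i \in S -> j \in S ->
  forall x y, sigma (swap_basis i j x) y = sigma x y.
Proof.
move=> hr [dens hpt] SSc iS jS.
have hT : Tsw sigma i j = 1.
  rewrite (Tsw_ptrace _ iS jS).
  under eq_bigr => a _ do rewrite (hpt S SSc).
  rewrite -(Tsw_ptrace _ iS jS) /Tsw.
  under eq_bigr => x _ do rewrite (sym_rows hr).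
  by case: hr => [[_ _ ->]].
have R := row_inv dens hT.
case: dens => herm _ _ x y.
by rewrite herm R -herm.
Qed.

Definition invb (C : numClosedFieldType) n (A : oper C n) (i j : 'I_n) : bool :=
  [forall x, forall y, A (swap_basis i j x) y == A x y].

Lemma invbP (C : numClosedFieldType) n (A : oper C n) i j :
  reflect (forall x y, A (swap_basis i j x) y = A x y) (invb A i j).
Proof.
apply: (iffP forallP) => [H x y|H x]; first by have /forallP/(_ y)/eqP := H x.
by apply/forallP => y; rewrite H.
Qed.

Lemma swap_refl n (i : 'I_n) x : swap_basis i i x = x.
Proof. by apply/ffunP => k; rewrite ffunE tperm1 perm1. Qed.

Lemma swap_conj n (i j k : 'I_n) x : k != i -> k != j ->
  swap_basis i k x = swap_basis i j (swap_basis j k (swap_basis i j x)).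
Proof.
move=> ki kj; apply/ffunP => m; rewrite !ffunE.
have := permJ (tperm j k) (tperm i j) (tperm i j m).
rewrite tpermK tpermJ tpermR (@tpermD _ i j k) 1?eq_sym // => ->; by [].
Qed.

Lemma invb_trans (C : numClosedFieldType) n (A : oper C n) i j k :
  invb A i j -> invb A j k -> invb A i k.
Proof.
move=> /invbP hij /invbP hjk; apply/invbP => x y.
have [->|ki] := eqVneq k i; first by rewrite swap_refl.
have [->|kj] := eqVneq k j; first exact: hij.
by rewrite (swap_conj _ ki kj) hij hjk hij.
Qed.

Lemma invb_sym (C : numClosedFieldType) n (A : oper C n) i j :
  invb A i j -> invb A j i.
Proof.
move=> /invbP h; apply/invbP => x y.
have -> : swap_basis j i x = swap_basis i j x.
  by apply/ffunP => m; rewrite !ffunE tpermC.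
exact: h.
Qed.

Theorem mainTheorem13 (C : numClosedFieldType) (n : nat)
  (rho : oper C n) (Sc : {set {set 'I_n}}) :
  sym_state rho -> hconnected Sc ->
  forall sigma : oper C n, compat rho Sc sigma -> sym_state sigma.
Proof.
move=> hr hc sigma hcomp.
have hall : forall i j, invb sigma i j.
  move=> i j.
  pose X := [set k | invb sigma i k].
  have iX : i \in X by rewrite inE; apply/invbP => x y; rewrite swap_refl.
  have [XC|XC] := eqVneq (~: X) set0.
    have : j \notin ~: X by rewrite XC inE.
    by rewrite inE negbK inE.
  have XN : X != set0 by apply/set0Pn; exists i.
  have [S SSc /andP [h1 h2]] := hc X XN XC.
  move/set0Pn: h1 => [a]; rewrite !inE => /andP [aS aX].
  move/set0Pn: h2 => [b]; rewrite !inE => /andP [bS bX].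
  have hab : invb sigma a b by apply/invbP; apply: (pair_inv hr hcomp SSc aS bS).
  by move: bX; rewrite (invb_trans aX hab).
split; first by case: hcomp.
move=> v i j x; rewrite /apply_op; apply: eq_bigr => y _.
by have /invbP -> := hall i j.
Qed.
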